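(* Let $\phi:\mathbb{N}\to\mathbb{N}$ satisfy $\phi(n)\to\infty$ as $n\to\infty$. Then there is no triple $(f,A,P)$, where $f$ assigns a binary string $f(C_n)$ of length at most $\log\log\log n-\phi(n)$ to the $n$-node oriented ring $C_n$ (for all sufficiently large $n$), $A$ is a deterministic exploration algorithm and $P$ is a polynomial, such that for every sufficiently large $n$ the agent executing $A$ with input $f(C_n)$, starting at a node of $C_n$, visits all nodes of $C_n$ and stops after at most $P(n)$ edge traversals. In particular, neither a map oracle nor an instance oracle giving advice of size at most $\log\log\log n-\phi(n)$ permits exploration of all $n$-node oriented rings in time polynomial in $n$.
   Context: Model: a graph is a simple connected undirected graph with $n$ nodes. Nodes are unlabeled; at each node of degree $d$ the incident edges carry distinct port numbers $0,\dots,d-1$. A mobile agent starts at some node. At each step, located at a node $u$ whose degree it knows, it chooses a port at $u$ and traverses the corresponding edge to a neighbor $w$; upon arrival it learns the port number of this edge at $w$ and the degree of $w$. The agent must visit all nodes and stop; the time is the number of edge traversals. A deterministic exploration algorithm receives as input a binary string (advice); the size of advice is its length. A map oracle assigns advice to each port-numbered graph; an instance oracle assigns advice to each pair (graph, starting node). An oriented ring is a cycle in which at every node the ports $0$ and $1$ are in clockwise order (so all nodes look identical). Logarithms are to base 2. *)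

(* Defs.v *)
From Stdlib Require Import Reals Lra Lia List.
Import ListNotations.
Open Scope R_scope.

Definition log2R (x : R) : R := ln x / ln 2.

(* A real polynomial given by its coefficient list [a0; a1; ...; ad],
   evaluated by Horner's rule. *)
Definition poly_eval (P : list R) (x : R) : R :=
  fold_right (fun a acc => a + x * acc) 0 P.

(* Observation after a traversal: (port number of the edge at the arrival
   node, degree of the arrival node). *)
Definition obs := (nat * nat)%type.

(* A deterministic exploration algorithm with advice: given the advice
   string, the degree of the starting node and the history of observations
   so far, it either stops (None) or chooses a port (Some p). *)
Definition algo := list bool -> nat -> list obs -> option nat.

(* The n-node oriented ring C_n: nodes 0..n-1 in clockwise order; at every
   node port 0 leads to the clockwise neighbour and port 1 to the
   counterclockwise one.  Hence the edge {i, i+1 mod n} has port 0 at i and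
   port 1 at i+1 mod n; every node has degree 2. *)
Definition ring_move (n p q : nat) : nat :=
  if Nat.eqb q 0 then Nat.modulo (p + 1) n else Nat.modulo (p + n - 1) n.

Definition ring_arrival_port (q : nat) : nat :=
  if Nat.eqb q 0 then 1%nat else 0%nat.

(* Configuration (current node, history) of the agent executing [A] with
   advice [adv] on C_n from start node [s], after k traversals; None if the
   agent stopped earlier or chose an invalid port. *)
Fixpoint ring_config (A : algo) (adv : list bool) (n s : nat) (k : nat)
  : option (nat * list obs) :=
  match k with
  | O => Some (s, [])
  | S k' =>
      match ring_config A adv n s k' with
      | None => None
      | Some (p, h) =>
          match A adv 2%nat h with
          | None => None
          | Some q =>
              if Nat.ltb q 2 then
                Some (ring_move n p q, h ++ [(ring_arrival_port q, 2%nat)])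
              else None
          end
      end
  end.

Definition ring_explores (A : algo) (adv : list bool) (n s : nat) (T : R) : Prop :=
  exists t : nat,
    INR t <= T /\
    (exists p h, ring_config A adv n s t = Some (p, h) /\ A adv 2%nat h = None) /\
    (forall v : nat, (v < n)%nat ->
       exists i p h, (i <= t)%nat /\ ring_config A adv n s i = Some (p, h) /\ p = v).

(* Main.v *)
Require Import Defs.
From Stdlib Require Import Reals Lra Lia List Arith.
Import ListNotations.
Open Scope R_scope.

Lemma cfg_sim A adv n s n' s' : forall k p h,
  ring_config A adv n s k = Some (p, h) ->
  exists p', ring_config A adv n' s' k = Some (p', h).
Proof.
  induction k as [|k IH]; intros p h H; simpl in *.
  - inversion H; subst; eauto.
  - destruct (ring_config A adv n s k) as [[p0 h0]|] eqn:E; [|discriminate].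
    destruct (IH _ _ eq_refl) as [p1 E1]. rewrite E1.
    destruct (A adv 2%nat h0) as [q|]; [|discriminate].
    destruct (Nat.ltb q 2); [|discriminate].
    inversion H; subst. eauto.
Qed.

Lemma cfg_none_after A adv n s k k' :
  ring_config A adv n s k = None -> (k <= k')%nat -> ring_config A adv n s k' = None.
Proof.
  intros H Hk. induction Hk; auto. simpl. rewrite IHHk. auto.
Qed.

Lemma cfg_stop A adv n s k p h :
  ring_config A adv n s k = Some (p, h) -> A adv 2%nat h = None ->
  ring_config A adv n s (S k) = None.
Proof. intros H1 H2. simpl. rewrite H1, H2. auto. Qed.

Lemma time_le A adv n n' t t' p h p' h' :
  ring_config A adv n 0 t = Some (p, h) -> A adv 2%nat h = None ->
  ring_config A adv n' 0 t' = Some (p', h') -> (t' <= t)%nat.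
Proof.
  intros H1 H2 H3. destruct (le_lt_dec t' t) as [|Hlt]; auto. exfalso.
  destruct (cfg_sim A adv n 0 n' 0 t p h H1) as [p1 E1].
  pose proof (cfg_stop _ _ _ _ _ _ _ E1 H2) as E2.
  rewrite (cfg_none_after _ _ _ _ _ _ E2 Hlt) in H3. discriminate.
Qed.

Lemma pigeon (g : nat -> nat) n t :
  (forall v, (v < n)%nat -> exists i, (i <= t)%nat /\ g i = v) -> (n <= S t)%nat.
Proof.
  intros H.
  assert (Hi : incl (seq 0 n) (map g (seq 0 (S t)))).
  { intros v Hv. apply in_seq in Hv. destruct (H v ltac:(lia)) as [i [Hi Hg]].
    apply in_map_iff. exists i. split; auto. apply in_seq. lia. }
  pose proof (NoDup_incl_length (seq_NoDup n 0) Hi).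
  rewrite length_map, !length_seq in H0. exact H0.
Qed.

Fixpoint all_upto (l : nat) : list (list bool) :=
  match l with
  | O => [[]]
  | S l' => [] :: map (cons true) (all_upto l') ++ map (cons false) (all_upto l')
  end.

Lemma all_upto_len l : (length (all_upto l) + 1 = 2 ^ S l)%nat.
Proof.
  induction l; simpl in *; auto.
  rewrite length_app, !length_map. lia.
Qed.

Lemma all_upto_in l : forall s : list bool, (length s <= l)%nat -> In s (all_upto l).
Proof.
  induction l; intros s Hs.
  - destruct s; simpl in *; [auto | lia].
  - destruct s as [|b s]; simpl; [auto|]. right. apply in_or_app.
    simpl in Hs. destruct b; [left|right]; apply in_map; apply IHl; lia.
Qed.

Lemma nodup_map_seq {X} (g : nat -> X) m : forall a,
  (forall i j, (a <= i)%nat -> (i < j)%nat -> (j < a + m)%nat -> g i <> g j) ->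
  NoDup (map g (seq a m)).
Proof.
  induction m; intros a H; simpl; constructor.
  - intros Hin. apply in_map_iff in Hin. destruct Hin as [j [Hj Hin]].
    apply in_seq in Hin. apply (H a j); auto; lia.
  - apply IHm. intros i j ? ? ?. apply H; lia.
Qed.

Fixpoint abssum (P : list R) : R :=
  match P with [] => 0 | a :: P' => Rabs a + abssum P' end.

Lemma abssum_ge0 P : 0 <= abssum P.
Proof. induction P; simpl; [lra|]. pose proof (Rabs_pos a); lra. Qed.

Lemma poly_bound P x : 1 <= x -> Rabs (poly_eval P x) <= abssum P * x ^ length P.
Proof.
  intros Hx. induction P as [|a P IH]; simpl.
  - rewrite Rabs_R0. lra.
  - pose proof (pow_R1_Rle x (length P) Hx).
    pose proof (abssum_ge0 P). pose proof (Rabs_pos a).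
    eapply Rle_trans. apply Rabs_triang. rewrite Rabs_mult, (Rabs_right x) by lra.
    assert (x * Rabs (poly_eval P x) <= x * (abssum P * x ^ length P))
      by (apply Rmult_le_compat_l; lra).
    assert (Rabs a <= Rabs a * (x * x ^ length P)).
    { rewrite <- (Rmult_1_r (Rabs a)) at 1. apply Rmult_le_compat_l; [lra|].
      rewrite <- (Rmult_1_r 1). apply Rmult_le_compat; lra. }
    nra.
Qed.

Lemma poly_pow P : exists D N, forall n : nat, (N <= n)%nat ->
  poly_eval P (INR n) <= INR (n ^ D).
Proof.
  destruct (INR_archimed 1 (abssum P + 1) ltac:(lra)) as [N HN].
  exists (S (length P)), N. intros n Hn.
  apply le_INR in Hn. rewrite Rmult_1_r in HN.
  pose proof (abssum_ge0 P).
  assert (Hx : 1 <= INR n) by lra.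
  pose proof (poly_bound P (INR n) Hx).
  pose proof (pow_R1_Rle (INR n) (length P) Hx).
  rewrite pow_INR. simpl.
  assert (abssum P * INR n ^ length P <= INR n * INR n ^ length P)
    by (apply Rmult_le_compat_r; lra).
  pose proof (Rle_abs (poly_eval P (INR n))). lra.
Qed.

Lemma ln2_pos : 0 < ln 2.
Proof. rewrite <- ln_1. apply ln_increasing; lra. Qed.

Lemma INR2 : INR 2 = 2.
Proof. simpl. lra. Qed.

Lemma log2_pow k : log2R (INR (2 ^ k)) = INR k.
Proof.
  unfold log2R. rewrite pow_INR, INR2, ln_pow by lra.
  pose proof ln2_pos. field. lra.
Qed.

Lemma log2_bound k X : (0 < X)%nat -> INR k <= log2R (INR X) -> (2 ^ k <= X)%nat.
Proof.
  intros HX H. unfold log2R in H. pose proof ln2_pos.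
  apply INR_le. rewrite pow_INR, INR2.
  apply lt_0_INR in HX.
  assert (INR k * ln 2 <= ln (INR X)).
  { apply (Rmult_le_compat_r (ln 2)) in H; [|lra].
    unfold Rdiv in H. rewrite Rmult_assoc, Rinv_l, Rmult_1_r in H; lra. }
  rewrite <- ln_pow in H1 by lra.
  destruct (Rle_lt_dec (2 ^ k) (INR X)) as [|Hc]; auto.
  apply ln_increasing in Hc; [lra|auto].
Qed.

Lemma nn_grow D K i j : (4 <= K)%nat -> (i < j)%nat ->
  (4 * (2 ^ (2 ^ (K + D * i))) ^ D <= 2 ^ (2 ^ (K + D * j)))%nat.
Proof.
  intros HK Hij. set (x := (2 ^ (K + D * i))%nat).
  assert (Hx : (2 <= x)%nat).
  { unfold x. pose proof (Nat.pow_le_mono_r 2 1 (K + D*i) ltac:(lia) ltac:(lia)). simpl in H. lia. }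
  assert (HD : (D < 2 ^ D)%nat) by (apply Nat.pow_gt_lin_r; lia).
  assert (H1 : (x * D + 2 <= 2 ^ (K + D * j))%nat).
  { apply Nat.le_trans with (2 ^ (K + D * i + D))%nat.
    - rewrite Nat.pow_add_r. fold x. nia.
    - apply Nat.pow_le_mono_r; nia. }
  apply Nat.le_trans with (2 ^ (x * D + 2))%nat.
  - rewrite Nat.pow_add_r, Nat.pow_mul_r. simpl. lia.
  - apply Nat.pow_le_mono_r; lia.
Qed.

Theorem mainTheorem2 (phi : nat -> nat)
  (Hphi : forall M : nat, exists N : nat, forall n : nat, (N <= n)%nat -> (M <= phi n)%nat) :
  ~ (exists (f : nat -> list bool) (A : algo) (P : list R),
       (exists N : nat, forall n : nat, (N <= n)%nat ->
          INR (length (f n)) <= log2R (log2R (log2R (INR n))) - INR (phi n)) /\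
       (exists N : nat, forall n : nat, (N <= n)%nat ->
          forall s : nat, (s < n)%nat ->
            ring_explores A (f n) n s (poly_eval P (INR n)))).
Proof.
  intros [f [A [P [[N1 HL] [N2 HE]]]]].
  destruct (poly_pow P) as [D [N3 HP]].
  destruct (Hphi (D + 3)%nat) as [N4 H4].
  set (K := (N1 + N2 + N3 + N4 + 4)%nat).
  set (nn := fun j => (2 ^ (2 ^ (K + D * j)))%nat).
  assert (Hbig : forall j, (K <= nn j)%nat).
  { intro j. unfold nn.
    pose proof (Nat.pow_gt_lin_r 2 (K + D * j) ltac:(lia)).
    pose proof (Nat.pow_gt_lin_r 2 (2 ^ (K + D * j)) ltac:(lia)). lia. }
  assert (Hlen : forall j, (j <= K)%nat -> (4 * 2 ^ length (f (nn j)) <= K)%nat).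
  { intros j Hj. set (L := length (f (nn j))).
    pose proof (HL (nn j) ltac:(specialize (Hbig j); lia)) as HLj.
    pose proof (H4 (nn j) ltac:(specialize (Hbig j); lia)) as H4j.
    unfold nn at 2 in HLj. rewrite (log2_pow (2 ^ (K + D * j))), log2_pow in HLj.
    apply le_INR in H4j.
    assert (Hb : INR (L + (D + 3)) <= log2R (INR (K + D * j))).
    { rewrite plus_INR. fold L in HLj. lra. }
    apply log2_bound in Hb; [|lia].
    rewrite Nat.pow_add_r in Hb.
    assert (HD : (D < 2 ^ D)%nat) by (apply Nat.pow_gt_lin_r; lia).
    rewrite Nat.pow_add_r in Hb. simpl (2 ^ 3)%nat in Hb.
    assert (Hj' : (K + D * j <= (D + 1) * K)%nat) by nia.
    set (a := (2 ^ L)%nat) in *. set (b := (2 ^ D)%nat) in *.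
    assert (a * (8 * (D + 1)) <= (D + 1) * K)%nat by nia.
    nia. }
  assert (Hdist : forall i j, (i < j)%nat -> (j <= K)%nat -> f (nn i) <> f (nn j)).
  { intros i j Hij Hj Heq.
    destruct (HE (nn i) ltac:(specialize (Hbig i); lia) 0%nat ltac:(specialize (Hbig i); lia))
      as [ti [Hti [[pi [hi [Ci Si]]] _]]].
    destruct (HE (nn j) ltac:(specialize (Hbig j); lia) 0%nat ltac:(specialize (Hbig j); lia))
      as [tj [_ [[pj [hj [Cj Sj]]] Cov]]].
    rewrite <- Heq in Cj, Cov.
    pose proof (time_le _ _ _ _ _ _ _ _ _ _ Ci Si Cj) as Htt.
    pose proof (HP (nn i) ltac:(specialize (Hbig i); lia)).
    assert (Hti' : (ti <= nn i ^ D)%nat) by (apply INR_le; lra).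
    assert (Hpg : (nn j <= S tj)%nat).
    { apply (pigeon (fun k => match ring_config A (f (nn i)) (nn j) 0 k with
                             | Some (p, _) => p | None => 0%nat end)).
      intros v Hv. destruct (Cov v Hv) as [k [p [h [Hk [Ck Hp]]]]].
      exists k. split; auto. rewrite Ck. auto. }
    pose proof (nn_grow D K i j ltac:(unfold K; lia) Hij). fold (nn i) (nn j) in H0.
    assert (1 <= nn i ^ D)%nat.
    { pose proof (Nat.pow_le_mono_l 1 (nn i) D ltac:(specialize (Hbig i); lia)).
      rewrite Nat.pow_1_l in H1. lia. }
    lia. }
  set (l := (Nat.log2 K - 2)%nat).
  assert (HK4 : (4 <= K)%nat) by (unfold K; lia).
  assert (HlK : (2 <= Nat.log2 K)%nat) by (apply Nat.log2_le_pow2; simpl; lia).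
  assert (Hl : (2 ^ S (S l) <= K)%nat).
  { replace (S (S l)) with (Nat.log2 K) by (unfold l; lia). apply Nat.log2_spec; lia. }
  assert (Hincl : incl (map (fun j => f (nn j)) (seq 0 (S K))) (all_upto l)).
  { intros s Hs. apply in_map_iff in Hs. destruct Hs as [j [<- Hj]].
    apply in_seq in Hj. apply all_upto_in.
    pose proof (Hlen j ltac:(lia)).
    assert (2 ^ (length (f (nn j)) + 2) <= K)%nat
      by (rewrite Nat.pow_add_r; simpl; lia).
    apply Nat.log2_le_pow2 in H0; [|lia]. unfold l. lia. }
  assert (Hnd : NoDup (map (fun j => f (nn j)) (seq 0 (S K)))).
  { apply nodup_map_seq. intros i j ? ? ?. apply Hdist; lia. }
  pose proof (NoDup_incl_length Hnd Hincl).
  rewrite length_map, length_seq in H.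
  pose proof (all_upto_len l).
  rewrite Nat.pow_succ_r' in Hl. lia.
Qed.
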